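(* Fix an observation sequence $\{s_t,a_t\}_{t\in\mathbb Z}$, integers $t_1\le t_2$, $\mathbb I=[t_1:t_2]$, and $\theta,\hat\theta\in\Theta$ (possibly equal). Let $\{\varphi^\theta_t\}_{t\in\mathbb I},\{\hat\varphi^{\hat\theta}_t\}_{t\in\mathbb I},\{\rho^\theta_t\}_{t\in\mathbb I},\{\hat\rho^{\hat\theta}_t\}_{t\in\mathbb I}$ be strictly positive probability measures on $\mathcal O\times\{0,1\}$ such that $F^\theta_t\varphi^\theta_{t-1}=\varphi^\theta_t$ and $F^{\hat\theta}_t\hat\varphi^{\hat\theta}_{t-1}=\hat\varphi^{\hat\theta}_t$ for $t\in\mathbb I$, $t\ne t_1$, and $B^\theta_t\rho^\theta_{t+1}=\rho^\theta_t$ and $B^{\hat\theta}_t\hat\rho^{\hat\theta}_{t+1}=\hat\rho^{\hat\theta}_t$ for $t\in\mathbb I$, $t\ne t_2$. Then $$\big\|(\varphi^\theta\otimes\rho^\theta)_{t_2}-(\hat\varphi^{\hat\theta}\otimes\rho^\theta)_{t_2}\big\|_{TV}\le\Big(1-\frac{\epsilon_b^2\zeta}{|\mathcal O|}\Big)^{t_2-t_1}+\frac{|\mathcal O|\,z_{\theta,\hat\theta}\,L_{\theta,\|\hat\theta-\theta\|_2}}{\epsilon_b^2\zeta}\|\hat\theta-\theta\|_2,$$ $$\big\|(\hat\varphi^{\hat\theta}\otimes\rho^\theta)_{t_1}-(\hat\varphi^{\hat\theta}\otimes\hat\rho^{\hat\theta})_{t_1}\big\|_{TV}\le\Big(1-\frac{\epsilon_b^2\zeta}{|\mathcal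 O|}\Big)^{t_2-t_1}+\frac{|\mathcal O|\,z_{\theta,\hat\theta}\,L_{\theta,\|\hat\theta-\theta\|_2}}{\epsilon_b^2\zeta}\|\hat\theta-\theta\|_2.$$
   Context: $\mathcal S,\mathcal A,\mathcal O$ are finite sets; $\Theta=\Theta_{hi}\times\Theta_{lo}\times\Theta_b$ is a convex compact subset of a Euclidean space. There are policies $\pi_{hi}(o\mid s;\theta_{hi})$ (distribution on $\mathcal O$), $\pi_{lo}(a\mid s,o;\theta_{lo})$ (distribution on $\mathcal A$), $\pi_b(b\mid s,o';\theta_b)$ (distribution on $\{0,1\}$); standing assumption: on an open set $\tilde\Theta\supseteq\Theta$ they are defined, strictly positive and continuously differentiable in $\theta$. For fixed $\zeta\in(0,1)$, $\bar\pi_{hi}(o_t\mid s_t,o_{t-1},b_t;\theta_{hi})$ equals $\pi_{hi}(o_t\mid s_t;\theta_{hi})$ if $b_t=1$, $1-\zeta+\zeta/|\mathcal O|$ if $b_t=0,o_t=o_{t-1}$, $\zeta/|\mathcal O|$ if $b_t=0,o_t\ne o_{t-1}$. Let $\epsilon_b>0$ be a constant for which there is a conditional distribution $\bar\pi_{o,b}(o_t,b_t\mid s_t;\theta)$ on $\mathcal O\times\{0,1\}$ with $0<\epsilon_b\zeta\bar\pi_{o,b}(o_t,b_t\mid s_t;\theta)\le\pi_b(b_t\mid s_t,o_{t-1};\theta_b)\bar\pi_{hi}(o_t\mid s_t,o_{t-1},b_t;\theta_{hi})\le\epsilon_b^{-1}|\mathcal O|\bar\pi_{o,b}(o_t,b_t\mid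 s_t;\theta)$ for all $\theta\in\Theta$ and all arguments (such $\epsilon_b$ exists). Define $h(\theta;o_{t-1},s_t,a_t,o_t,b_t)=\pi_b(b_t\mid s_t,o_{t-1};\theta_b)\bar\pi_{hi}(o_t\mid s_t,o_{t-1},b_t;\theta_{hi})\pi_{lo}(a_t\mid s_t,o_t;\theta_{lo})$. For $\theta\in\Theta,\delta>0$, $L_{\theta,\delta}$ is the smallest $L$ such that for all arguments, $\tilde\theta\mapsto h(\tilde\theta;\cdot)$ is $L$-Lipschitz on $\{\tilde\theta\in\Theta:\|\tilde\theta-\theta\|_2\le\delta\}$. Let $z_{\theta,\hat\theta}=\max_{s',a'}\frac{[\max_{o_{t-1},o_t,b_t}h(\theta;o_{t-1},s',a',o_t,b_t)]\vee[\max_{o_{t-1},o_t,b_t}h(\hat\theta;o_{t-1},s',a',o_t,b_t)]}{[\min_{o_{t-1},o_t,b_t}h(\theta;o_{t-1},s',a',o_t,b_t)][\min_{o_{t-1},o_t,b_t}h(\hat\theta;o_{t-1},s',a',o_t,b_t)]}$. Given the observation sequence, for probability measures $\varphi,\rho$ on $\mathcal O\times\{0,1\}$: the forward operator $F^\theta_t\varphi(o_t,b_t)\propto\sum_{o_{t-1},b_{t-1}}h(\theta;o_{t-1},s_t,a_t,o_t,b_t)\varphi(o_{t-1},b_{t-1})$ and backward operator $B^\theta_t\rho(o_t,b_t)\propto\sum_{o_{t+1},b_{t+1}}h(\theta;o_t,s_{t+1},a_{t+1},o_{t+1},b_{t+1})\rho(o_{t+1},b_{t+1})$ (both normalized to probability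 measures). For families $\varphi,\rho$, $(\varphi\otimes\rho)_t(o_t,b_t)\propto\varphi_t(o_t,b_t)\rho_t(o_t,b_t)$ (normalized). $\|\nu_1-\nu_2\|_{TV}=\frac12\sum|\nu_1-\nu_2|$. *)

(* Defs.v *)
From HB Require Import structures.
From mathcomp Require Import all_boot all_order all_algebra.
From mathcomp Require Import all_classical all_reals all_analysis.
Set Implicit Arguments. Unset Strict Implicit. Unset Printing Implicit Defensive.
Import Order.TTheory GRing.Theory Num.Theory.
Import numFieldNormedType.Exports.
Local Open Scope ring_scope.
Local Open Scope classical_set_scope.

Section Generic.
Variable R : realType.

Definition convex_rV n (C : set 'rV[R]_n) :=
  forall x y (l : R), C x -> C y -> 0 <= l -> l <= 1 -> C (l *: x + (1 - l) *: y).

Definition C1_on n (U : set 'rV[R]_n) (f : 'rV[R]_n -> R) :=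
  (forall x, U x -> differentiable f x) /\
  (forall i : 'I_n, forall x, U x ->
     {for x, continuous (fun y => derive f y (delta_mx 0 i))}).

Definition sqnorm n (v : 'rV[R]_n) : R := \sum_i (v 0 i) ^+ 2.

Definition is_distr (T : finType) (f : T -> R) :=
  (forall x, 0 <= f x) /\ \sum_x f x = 1.
End Generic.

Section Model.
Variables (R : realType) (S A O : finType) (nh nl nb : nat).

Definition param := ('rV[R]_nh * 'rV[R]_nl * 'rV[R]_nb)%type.

Definition dist2 (x y : param) : R :=
  Num.sqrt (sqnorm (x.1.1 - y.1.1) + sqnorm (x.1.2 - y.1.2) + sqnorm (x.2 - y.2)).

Definition inTheta (Th : set 'rV[R]_nh) (Tl : set 'rV[R]_nl) (Tb : set 'rV[R]_nb)
  (x : param) : Prop := Th x.1.1 /\ Tl x.1.2 /\ Tb x.2.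

Variables (pihi : 'rV[R]_nh -> S -> O -> R)
          (pilo : 'rV[R]_nl -> S -> O -> A -> R)
          (pib  : 'rV[R]_nb -> S -> O -> bool -> R)  (* pi_b(b | s, o'; th_b), b=true <-> 1 *)
          (zeta : R).

Definition cardO : R := #|O|%:R.

Definition pihibar (th : 'rV[R]_nh) (s : S) (o' : O) (b : bool) (o : O) : R :=
  if b then pihi th s o
  else if o == o' then 1 - zeta + zeta / cardO else zeta / cardO.

Definition hfun (th : param) (o' : O) (s : S) (a : A) (o : O) (b : bool) : R :=
  pib th.2 s o' b * pihibar th.1.1 s o' b o * pilo th.1.2 s o a.

Definition Lip (Th : set 'rV[R]_nh) (Tl : set 'rV[R]_nl) (Tb : set 'rV[R]_nb)
  (th : param) (delta : R) : R :=
  inf [set L : R | 0 <= L /\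
    forall (o' : O) (s : S) (a : A) (o : O) (b : bool) (x y : param),
      inTheta Th Tl Tb x -> inTheta Th Tl Tb y ->
      dist2 x th <= delta -> dist2 y th <= delta ->
      `|hfun x o' s a o b - hfun y o' s a o b| <= L * dist2 x y].

Definition hmax (th : param) (s : S) (a : A) : R :=
  \big[Num.max/0]_(p : O * O * bool) hfun th p.1.1 s a p.1.2 p.2.
Definition hmin (th : param) (s : S) (a : A) : R :=
  \big[Num.min/hmax th s a]_(p : O * O * bool) hfun th p.1.1 s a p.1.2 p.2.

Definition zcoef (th th' : param) : R :=
  \big[Num.max/0]_(p : S * A)
    (Num.max (hmax th p.1 p.2) (hmax th' p.1 p.2) /
     (hmin th p.1 p.2 * hmin th' p.1 p.2)).

Definition meas := (O -> bool -> R)%type.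

Definition normalize (f : meas) : meas :=
  fun o b => f o b / \sum_(p : O * bool) f p.1 p.2.

Variables (sq : int -> S) (aq : int -> A).

Definition Fop (th : param) (t : int) (phi : meas) : meas :=
  normalize (fun o b => \sum_(p : O * bool)
     hfun th p.1 (sq t) (aq t) o b * phi p.1 p.2).

Definition Bop (th : param) (t : int) (rho : meas) : meas :=
  normalize (fun o b => \sum_(p : O * bool)
     hfun th o (sq (t + 1)) (aq (t + 1)) p.1 p.2 * rho p.1 p.2).
End Model.

Definition otimes (R : realType) (O : finType) (phi rho : meas R O) : meas R O :=
  normalize (fun o b => phi o b * rho o b).

Definition tv (R : realType) (O : finType) (f g : meas R O) : R :=
  2^-1 * \sum_(p : O * bool) `|f p.1 p.2 - g p.1 p.2|.

Definition strict_prob (R : realType) (O : finType) (f : meas R O) :=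
  (forall o b, 0 < f o b) /\ \sum_(p : O * bool) f p.1 p.2 = 1.

(* Main.v *)
Require Import Defs.
From HB Require Import structures.
From mathcomp Require Import all_boot all_order all_algebra.
From mathcomp Require Import all_classical all_reals all_analysis.
From mathcomp Require Import ring lra zify.
Set Implicit Arguments. Unset Strict Implicit. Unset Printing Implicit Defensive.
Import Order.TTheory GRing.Theory Num.Theory.
Import numFieldNormedType.Exports.
Local Open Scope ring_scope.

Section Fin.
Variables (R : realType) (X : finType).

Definition nrm (f : X -> R) : X -> R := fun x => f x / \sum_y f y.
Definition L1 (f g : X -> R) : R := \sum_x `|f x - g x|.

Lemma sum_nrm (f : X -> R) : \sum_x f x != 0 -> \sum_x nrm f x = 1.
Proof. by move=> h; rewrite /nrm -mulr_suml mulfV. Qed.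

Lemma nrm_ge0 (f : X -> R) : (forall x, 0 <= f x) -> forall x, 0 <= nrm f x.
Proof.
move=> h x; rewrite /nrm divr_ge0 //; exact: sumr_ge0.
Qed.

Lemma nrm_gt0 (f : X -> R) : (forall x, 0 < f x) -> forall x, 0 < nrm f x.
Proof.
move=> h x; rewrite /nrm divr_gt0 //; apply: lt_le_trans (h x) _.
rewrite (bigD1 x) //= lerDl; apply: sumr_ge0 => y _; exact: ltW.
Qed.

Lemma nrm_scale (f : X -> R) (c : R) : c != 0 ->
  nrm (fun x => f x * c) = nrm f.
Proof.
move=> c0; apply/funext => x; rewrite /nrm -mulr_suml.
have [s0|s0] := eqVneq (\sum_y f y) 0.
  by rewrite s0 mul0r !invr0 !mulr0.
by rewrite invfM mulrACA mulfV // mulr1.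
Qed.

Lemma nrm_mulr (f g : X -> R) : \sum_y g y != 0 ->
  nrm (fun x => f x * nrm g x) = nrm (fun x => f x * g x).
Proof.
move=> h; rewrite -(nrm_scale (fun x => f x * g x) (invr_neq0 h)).
by congr nrm; apply/funext => x; rewrite /nrm mulrA.
Qed.

Lemma nrm_mull (f g : X -> R) : \sum_y g y != 0 ->
  nrm (fun x => nrm g x * f x) = nrm (fun x => g x * f x).
Proof.
move=> h; have -> : (fun x => nrm g x * f x) = (fun x => f x * nrm g x).
  by apply/funext => x; rewrite mulrC.
rewrite nrm_mulr //; congr nrm; apply/funext => x; exact: mulrC.
Qed.

Lemma nrm_ext (f g : X -> R) : (forall x, f x = g x) -> nrm f = nrm g.
Proof. by move=> h; congr nrm; apply/funext. Qed.

Lemma nrm_pert (a a' : X -> R) : (forall x, 0 <= a x) -> (forall x, 0 <= a' x) ->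
  0 < \sum_x a x -> 0 < \sum_x a' x ->
  L1 (nrm a) (nrm a') <= 2 * (\sum_x `|a x - a' x|) / \sum_x a x.
Proof.
move=> ha ha' As A's; set A := \sum_x a x in As *; set A' := \sum_x a' x in A's *.
have e : forall x, nrm a x - nrm a' x = (a x - a' x) / A + a' x * ((A' - A) / (A * A')).
  move=> x; rewrite /nrm -/A -/A'; field; by rewrite ?gt_eqF.
rewrite /L1.
apply: le_trans (_ : \sum_x (`|a x - a' x| / A + a' x * (`|A' - A| / (A * A'))) <= _).
  apply: ler_sum => x _; rewrite e; apply: le_trans (ler_normD _ _) _.
  have hAA0 : 0 <= (A * A')^-1 by rewrite invr_ge0 ltW // mulr_gt0.
  have hA0 : 0 <= A^-1 by rewrite invr_ge0 ltW.
  rewrite normrM normrM (ger0_norm (ha' x)) normrM (ger0_norm hAA0).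
  by rewrite (ger0_norm hA0).
rewrite big_split /= -mulr_suml -mulr_suml -/A'.
have hAA : A' * (`|A' - A| / (A * A')) = `|A' - A| / A.
  field; by rewrite ?gt_eqF.
rewrite hAA.
have : `|A' - A| <= \sum_x `|a x - a' x|.
  rewrite /A /A' -sumrB; apply: le_trans (ler_norm_sum _ _ _) _.
  by apply: ler_sum => x _; rewrite distrC.
move=> h; rewrite -mulrDl ler_pM2r ?invr_gt0 // mulr2n mulrDl mul1r lerD2l //.
Qed.


Lemma dob (K : X -> X -> R) (lam : X -> R) (c : R) (m m' : X -> R) :
  (forall x' x, c * lam x <= K x' x) -> (forall x', \sum_x K x' x = 1) ->
  \sum_x lam x = 1 -> \sum_x m x = \sum_x m' x ->
  \sum_x `|\sum_x' m x' * K x' x - \sum_x' m' x' * K x' x| <= (1 - c) * L1 m m'.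
Proof.
move=> hK hK1 hl hm.
have e : forall x, \sum_x' m x' * K x' x - \sum_x' m' x' * K x' x =
   \sum_x' (m x' - m' x') * (K x' x - c * lam x).
  move=> x.
  rewrite (eq_bigr (fun x' => (m x' - m' x') * K x' x - (m x' - m' x') * (c * lam x)) (P := xpredT) (r := index_enum X) (F1 := fun x' => (m x' - m' x') * (K x' x - c * lam x)));
    last by move=> x' _; rewrite mulrBr.
  have z : \sum_x' (m x' - m' x') * (c * lam x) = 0.
    by rewrite -big_distrl /= sumrB hm subrr mul0r.
  rewrite sumrB z subr0 -sumrB.
  by apply: eq_bigr => x' _; rewrite mulrBl.
apply: le_trans (_ : \sum_x \sum_x' `|m x' - m' x'| * (K x' x - c * lam x) <= _).
  apply: ler_sum => x _; rewrite e; apply: le_trans (ler_norm_sum _ _ _) _.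
  apply: ler_sum => x' _; rewrite normrM (ger0_norm (_ : 0 <= K x' x - c * lam x)) //.
  by rewrite subr_ge0.
rewrite exchange_big /= /L1 mulr_sumr; apply: ler_sum => x' _.
rewrite -mulr_sumr sumrB hK1 -mulr_sumr hl mulr1 mulrC.
by [].
Qed.

Definition uf (k : X -> X -> R) (w mu : X -> R) : X -> R :=
  fun x => (\sum_x' mu x' * k x' x) * w x.
Definition bf (k : X -> X -> R) (w : X -> R) : X -> R :=
  fun x' => \sum_x k x' x * w x.

Lemma step_contract (x0 : X) (k : X -> X -> R) (g nu w mu mu' : X -> R) (lo hi : R) :
  0 < lo -> 0 < hi -> (forall x, 0 < g x) -> (forall x, 0 < nu x) ->
  (forall x, 0 < w x) ->
  (forall x' x, lo * (g x' * nu x) <= k x' x) ->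
  (forall x' x, k x' x <= hi * (g x' * nu x)) ->
  (forall x, 0 < mu x) -> (forall x, 0 < mu' x) ->
  L1 (nrm (uf k w mu)) (nrm (uf k w mu')) <=
    (1 - lo / hi) * L1 (nrm (fun x => mu x * bf k w x)) (nrm (fun x => mu' x * bf k w x))
  /\ 0 <= 1 - lo / hi.
Proof.
move=> lo0 hi0 g0 nu0 w0 klo khi mu0 mu'0.
have k0 : forall x' x, 0 < k x' x.
  move=> x' x; apply: lt_le_trans (klo x' x); by rewrite !mulr_gt0.
have b0 : forall x', 0 < bf k w x'.
  move=> x'; rewrite /bf (bigD1 x0) //= ltr_pwDl ?mulr_gt0 //.
  by apply: sumr_ge0 => y _; rewrite ltW ?mulr_gt0.
set S := \sum_x nu x * w x.
have S0 : 0 < S.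
  rewrite /S (bigD1 x0) //= ltr_pwDl ?mulr_gt0 //.
  by apply: sumr_ge0 => y _; rewrite ltW ?mulr_gt0.
have bhi : forall x', bf k w x' <= hi * g x' * S.
  move=> x'; rewrite /S mulr_sumr; apply: ler_sum => x _.
  by rewrite mulrA ler_pM2r // -mulrA.
pose K x' x := k x' x * w x / bf k w x'.
pose lam x := nu x * w x / S.
have hK : forall x' x, lo / hi * lam x <= K x' x.
  move=> x' x; rewrite /K /lam.
  have e1 : lo / hi * (nu x * w x / S) = (lo * (g x' * nu x) * w x) / (hi * g x' * S).
    by field; rewrite ?gt_eqF //; apply/andP; split; rewrite ?gt_eqF.
  rewrite e1; apply: le_trans (_ : k x' x * w x / (hi * g x' * S) <= _).
    by rewrite ler_pM2r ?invr_gt0 ?mulr_gt0 // ler_pM2r.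
  rewrite ler_pM2l ?mulr_gt0 // lef_pV2 ?posrE ?mulr_gt0 //; exact: bhi.
have hK1 : forall x', \sum_x K x' x = 1.
  by move=> x'; rewrite /K /= -mulr_suml mulfV // (gt_eqF (b0 x')).
have hl : \sum_x lam x = 1 by rewrite /lam /= -mulr_suml mulfV // (gt_eqF S0).
have hm : forall mu0 : X -> R, (forall x, 0 < mu0 x) ->
    nrm (uf k w mu0) = fun x => \sum_x' nrm (fun x => mu0 x * bf k w x) x' * K x' x.
  move=> m0 m00; apply/funext => x; rewrite /nrm.
  set Sm := \sum_y m0 y * bf k w y.
  have Sm0 : 0 < Sm.
    rewrite /Sm (bigD1 x0) //= ltr_pwDl ?mulr_gt0 //.
    by apply: sumr_ge0 => y _; rewrite ltW ?mulr_gt0.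
  have -> : \sum_y uf k w m0 y = Sm.
    rewrite /uf /Sm /bf /=.
    under eq_bigr => y _ do rewrite mulr_suml.
    rewrite exchange_big /=; apply: eq_bigr => x' _; rewrite mulr_sumr.
    by apply: eq_bigr => y _; rewrite mulrA.
  rewrite /uf mulr_suml mulr_suml; apply: eq_bigr => x' _; rewrite /K.
  field; rewrite ?gt_eqF //.
have lohi : lo <= hi.
  have := le_trans (klo x0 x0) (khi x0 x0).
  by rewrite ler_pM2r ?mulr_gt0.
have c1 : 0 <= 1 - lo / hi by rewrite subr_ge0 ler_pdivrMr // mul1r.
split => //.
rewrite /L1 (hm _ mu0) (hm _ mu'0); apply: dob => //.
by rewrite !sum_nrm // gt_eqF // (bigD1 x0) //= ltr_pwDl ?mulr_gt0 //;
  apply: sumr_ge0 => y _; rewrite ltW ?mulr_gt0.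
Qed.


Lemma pos_sum (x0 : X) (f : X -> R) : (forall x, 0 < f x) -> 0 < \sum_x f x.
Proof.
move=> h; rewrite (bigD1 x0) //= ltr_pwDl //.
by apply: sumr_ge0 => y _; rewrite ltW.
Qed.

Lemma perturb (x0 : X) (k k' : X -> X -> R) (E m : R) (w mu : X -> R) :
  0 < m -> (forall x' x, m <= k x' x) -> (forall x' x, 0 < k' x' x) ->
  (forall x' x, `|k x' x - k' x' x| <= E) -> (forall x, 0 < w x) ->
  (forall x, 0 < mu x) ->
  L1 (nrm (uf k w mu)) (nrm (uf k' w mu)) <= 2 * (E / m).
Proof.
move=> m0 km k'0 kE w0 mu0.
have k0 : forall x' x, 0 < k x' x by move=> x' x; exact: lt_le_trans (km x' x).
have E0 : 0 <= E by apply: le_trans (kE x0 x0).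
have uf0 : forall kk, (forall x' x, 0 < kk x' x) -> forall x, 0 < uf kk w mu x.
  move=> kk kk0 x; rewrite /uf mulr_gt0 //; apply: (pos_sum x0) => y.
  by rewrite mulr_gt0.
set T := \sum_x \sum_x' mu x' * w x.
have T0 : 0 < T by apply: (pos_sum x0) => x; apply: (pos_sum x0) => y; rewrite mulr_gt0.
apply: le_trans (nrm_pert _ _ _ _) _.
- by move=> x; rewrite ltW // uf0.
- by move=> x; rewrite ltW // uf0.
- by apply: (pos_sum x0); apply: uf0.
- by apply: (pos_sum x0); apply: uf0.
rewrite -mulrA ler_pM2l // ler_pdivrMr; last by apply: (pos_sum x0); apply: uf0.
have h1 : \sum_x `|uf k w mu x - uf k' w mu x| <= E * T.
  rewrite /T mulr_sumr; apply: ler_sum => x _; rewrite /uf -mulrBl -sumrB normrM.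
  rewrite (gtr0_norm (w0 x)) mulr_sumr.
  apply: le_trans (ler_wpM2r (ltW (w0 x)) (ler_norm_sum _ _ _)) _.
  rewrite mulr_suml; apply: ler_sum => x' _.
  rewrite -mulrBr normrM (gtr0_norm (mu0 x')) mulrA (mulrC E) ler_pM2r // ler_pM2l //.
have h2 : m * T <= \sum_x uf k w mu x.
  rewrite /T mulr_sumr; apply: ler_sum => x _; rewrite /uf mulr_sumr mulr_suml.
  apply: ler_sum => x' _; rewrite mulrA (mulrC m) ler_pM2r // ler_pM2l //.
apply: le_trans h1 _.
apply: le_trans (_ : E / m * (m * T) <= _).
  by rewrite mulrA divfK ?gt_eqF.
by rewrite ler_wpM2l // divr_ge0 // ltW.
Qed.


Lemma L1_tri (a b c : X -> R) : L1 a c <= L1 a b + L1 b c.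
Proof.
rewrite /L1 -big_split /=; apply: ler_sum => x _.
by rewrite -(subrKA (b x)) ler_normD.
Qed.

Lemma sum_gt0_ne0 (x0 : X) (f : X -> R) : (forall x, 0 < f x) -> \sum_x f x != 0.
Proof. by move=> h; rewrite gt_eqF // (pos_sum x0). Qed.

Lemma fwd_step (x0 : X) (k k' : X -> X -> R) (nu : X -> R) (lo hi E m : R)
  (ph ph' w : X -> R) :
  0 < lo -> 0 < hi -> (forall x, 0 < nu x) ->
  (forall x' x, lo * (1 * nu x) <= k x' x) ->
  (forall x' x, k x' x <= hi * (1 * nu x)) ->
  0 < m -> (forall x' x, m <= k x' x) -> (forall x' x, 0 < k' x' x) ->
  (forall x' x, `|k x' x - k' x' x| <= E) ->
  (forall x, 0 < ph x) -> (forall x, 0 < ph' x) -> (forall x, 0 < w x) ->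
  2^-1 * L1 (nrm (fun x => nrm (fun x => \sum_p k p x * ph p) x * w x))
            (nrm (fun x => nrm (fun x => \sum_p k' p x * ph' p) x * w x))
  <= (1 - lo / hi) *
     (2^-1 * L1 (nrm (fun x => ph x * nrm (fun x => \sum_p k x p * w p) x))
                (nrm (fun x => ph' x * nrm (fun x => \sum_p k x p * w p) x)))
     + E / m.
Proof.
move=> lo0 hi0 nu0 klo khi m0 km k'0 kE ph0 ph'0 w0.
have k0 : forall x' x, 0 < k x' x by move=> x' x; exact: lt_le_trans (km x' x).
rewrite !nrm_mull; first last.
- by apply: (sum_gt0_ne0 x0) => x; apply: (pos_sum x0) => p; rewrite mulr_gt0.
- by apply: (sum_gt0_ne0 x0) => x; apply: (pos_sum x0) => p; rewrite mulr_gt0.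
have sb : \sum_y \sum_p k y p * w p != 0.
  by apply: (sum_gt0_ne0 x0) => x; apply: (pos_sum x0) => p; rewrite mulr_gt0.
rewrite !nrm_mulr //.
have eu : forall kk (f : X -> R), nrm (fun x => (\sum_p kk p x * f p) * w x) = nrm (uf kk w f).
  move=> kk f; apply: nrm_ext => x; rewrite /uf; congr (_ * _).
  by apply: eq_bigr => p _; rewrite mulrC.
rewrite (eu k ph) (eu k' ph').
have [hc c1] := step_contract x0 (g := fun=> 1) (k := k) (nu := nu) (w := w) lo0 hi0
  (fun=> ltr01) nu0 w0 klo khi ph0 ph'0.
have hp := perturb x0 m0 km k'0 kE w0 ph'0.
apply: le_trans (ler_wpM2l _ (L1_tri _ (nrm (uf k w ph')) _)) _.
  by rewrite invr_ge0.
rewrite mulrDr; apply: lerD.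
  by rewrite mulrCA ler_wpM2l // invr_ge0.
apply: le_trans (ler_wpM2l _ hp) _; first by rewrite invr_ge0.
set q := E / m; lra.
Qed.

Lemma bwd_step (x0 : X) (k k' : X -> X -> R) (nu : X -> R) (lo hi E m : R)
  (ph r r' : X -> R) :
  0 < lo -> 0 < hi -> (forall x, 0 < nu x) ->
  (forall x' x, lo * (1 * nu x) <= k' x' x) ->
  (forall x' x, k' x' x <= hi * (1 * nu x)) ->
  0 < m -> (forall x' x, m <= k x' x) -> (forall x' x, 0 < k' x' x) ->
  (forall x' x, `|k x' x - k' x' x| <= E) ->
  (forall x, 0 < ph x) -> (forall x, 0 < r x) -> (forall x, 0 < r' x) ->
  2^-1 * L1 (nrm (fun x => ph x * nrm (fun x => \sum_p k x p * r p) x))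
            (nrm (fun x => ph x * nrm (fun x => \sum_p k' x p * r' p) x))
  <= (1 - lo / hi) *
     (2^-1 * L1 (nrm (fun x => nrm (fun x => \sum_p k' p x * ph p) x * r x))
                (nrm (fun x => nrm (fun x => \sum_p k' p x * ph p) x * r' x)))
     + E / m.
Proof.
move=> lo0 hi0 nu0 klo khi m0 km k'0 kE ph0 r0 r'0.
have k0 : forall x' x, 0 < k x' x by move=> x' x; exact: lt_le_trans (km x' x).
pose KT x x' := k x' x.
pose K'T x x' := k' x' x.
have sb : forall (kk : X -> X -> R) (f : X -> R), (forall x' x, 0 < kk x' x) -> (forall x, 0 < f x) ->
    \sum_y \sum_p kk y p * f p != 0.
  by move=> kk f kk0 f0; apply: (sum_gt0_ne0 x0) => x; apply: (pos_sum x0) => p; rewrite mulr_gt0.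
have sb' : forall (kk : X -> X -> R) (f : X -> R), (forall x' x, 0 < kk x' x) -> (forall x, 0 < f x) ->
    \sum_y \sum_p kk p y * f p != 0.
  by move=> kk f kk0 f0; apply: (sum_gt0_ne0 x0) => x; apply: (pos_sum x0) => p; rewrite mulr_gt0.
rewrite (nrm_mulr _ (sb _ _ k0 r0)) (nrm_mulr _ (sb _ _ k'0 r'0)).
rewrite !(nrm_mull _ (sb' _ _ k'0 ph0)).
have eu : forall (kk : X -> X -> R) (f : X -> R), nrm (fun x => ph x * \sum_p kk x p * f p) =
     nrm (uf (fun x x' => kk x' x) ph f).
  move=> kk f; apply: nrm_ext => x; rewrite /uf mulrC; congr (_ * _).
  by apply: eq_bigr => p _; rewrite mulrC.
have eb : forall (f : X -> R), nrm (fun x => (\sum_p k' p x * ph p) * f x) =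
     nrm (fun x => f x * bf K'T ph x).
  by move=> f; apply: nrm_ext => x; rewrite mulrC.
rewrite (eu k r) (eu k' r') !eb.
have klo' : forall x' x, lo * (nu x' * 1) <= K'T x' x.
  by move=> x' x; rewrite mulr1 /K'T; move: (klo x x'); rewrite mul1r.
have khi' : forall x' x, K'T x' x <= hi * (nu x' * 1).
  by move=> x' x; rewrite mulr1 /K'T; move: (khi x x'); rewrite mul1r.
have [hc c1] := step_contract x0 (g := nu) (k := K'T) (nu := fun=> 1) (w := ph) lo0 hi0
  nu0 (fun=> ltr01) ph0
  klo' khi' r0 r'0.
have hp := perturb x0 (k := KT) (k' := K'T) m0 (fun x' x => km x x') (fun x' x => k'0 x x')
  (fun x' x => kE x x') ph0 r0.
apply: le_trans (ler_wpM2l _ (L1_tri _ (nrm (uf K'T ph r)) _)) _.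
  by rewrite invr_ge0.
rewrite mulrDr addrC; apply: lerD.
  by rewrite mulrCA ler_wpM2l // invr_ge0.
apply: le_trans (ler_wpM2l _ hp) _; first by rewrite invr_ge0.
set q := E / m; lra.
Qed.

Lemma rec_bound (D : nat -> R) (c e : R) (N : nat) : 0 < c -> 0 <= 1 - c -> 0 <= e ->
  D 0%N <= 1 -> (forall n, (n < N)%N -> D n.+1 <= (1 - c) * D n + e) ->
  forall n, (n <= N)%N -> D n <= (1 - c) ^+ n + e / c.
Proof.
move=> c0 c1 e0 D0 hD; elim=> [|n IH] hn.
  by rewrite expr0; apply: le_trans D0 _; rewrite lerDl divr_ge0 // ltW.
apply: le_trans (hD n hn) _.
apply: le_trans (_ : (1 - c) * ((1 - c) ^+ n + e / c) + e <= _).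
  by rewrite lerD2r ler_wpM2l // IH // ltnW.
rewrite exprS mulrDr -addrA lerD2l.
have -> : (1 - c) * (e / c) + e = e / c by field; rewrite gt_eqF.
by [].
Qed.

Lemma tv_le1 (x0 : X) (f g : X -> R) : (forall x, 0 < f x) -> (forall x, 0 < g x) ->
  2^-1 * L1 (nrm f) (nrm g) <= 1.
Proof.
move=> f0 g0.
have h : L1 (nrm f) (nrm g) <= 2.
  apply: le_trans (_ : \sum_x (nrm f x + nrm g x) <= _).
    apply: ler_sum => x _; apply: le_trans (ler_normB _ _) _.
    by rewrite !ger0_norm // ltW // nrm_gt0.
  rewrite big_split /= !sum_nrm ?(sum_gt0_ne0 x0) //.
rewrite ler_pdivrMl // mulr1 //.
Qed.

End Fin.

Local Open Scope classical_set_scope.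

Section Anal.
Variables (R : realType) (n : nat).

Lemma cont_bounded (T : set 'rV[R]_n) (g : 'rV[R]_n -> R) :
  compact T -> (forall x, T x -> {for x, continuous g}) ->
  exists M, 0 <= M /\ forall x, T x -> `|g x| <= M.
Proof.
move=> cT cg.
have wc : {within T, continuous g}.
  by apply: continuous_in_subspaceT => x; rewrite inE => Tx; apply: cg.
have := compact_bounded (continuous_compact wc cT).
case=> M0 [_ hM].
exists (`|M0| + 1); split; first by rewrite addr_ge0.
move=> x Tx.
have := hM (`|M0| + 1) _ (g x) _.
apply.
- by apply: le_lt_trans (ler_norm M0) _; rewrite ltrDl.
- by exists x.
Qed.


Lemma line_derive (f : 'rV[R]_n -> R) (y v : 'rV[R]_n) (t : R) :
  differentiable f (y + t *: v) ->
  is_derive t 1 (fun s : R => f (y + s *: v)) ('D_v f (y + t *: v)).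
Proof.
move=> df.
have e : (fun h : R => h^-1 *: (((fun s : R => f (y + s *: v)) \o shift t) (h *: 1) - f (y + t *: v))) =
  (fun h : R => h^-1 *: ((f \o shift (y + t *: v)) (h *: v) - f (y + t *: v))).
  apply/funext => h /=; congr (_ *: (f _ - _)).
  by rewrite scaler1 scalerDl addrCA addrC.
have hd : derivable f (y + t *: v) v by apply: diff_derivable.
have d1 : derivable (fun s : R => f (y + s *: v)) t 1.
  by rewrite /derivable e.
have d2 : 'D_1 (fun s : R => f (y + s *: v)) t = 'D_v f (y + t *: v).
  by rewrite /derive e.
by rewrite -d2; apply: derivableP.
Qed.


Lemma dir_sum (f : 'rV[R]_n -> R) (z v : 'rV[R]_n) : differentiable f z ->
  'D_v f z = \sum_(i < n) v 0 i * derive f z (delta_mx 0 i).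
Proof.
move=> df; rewrite deriveE // {1}(row_sum_delta v) linear_sum.
by apply: eq_bigr => i _; rewrite linearZ /= deriveE.
Qed.

Lemma abs_le_sqnorm (v : 'rV[R]_n) i : `|v 0 i| <= Num.sqrt (sqnorm v).
Proof.
rewrite -sqrtr_sqr ler_sqrt; last by rewrite /sqnorm sumr_ge0 // => j _; rewrite sqr_ge0.
by rewrite /sqnorm (bigD1 i) //= lerDl sumr_ge0 // => j _; rewrite sqr_ge0.
Qed.

Lemma lip_C1 (U T : set 'rV[R]_n) (f : 'rV[R]_n -> R) :
  C1_on U f -> T `<=` U -> convex_rV T -> compact T ->
  exists L, 0 <= L /\ forall x y, T x -> T y ->
    `|f x - f y| <= L * Num.sqrt (sqnorm (x - y)).
Proof.
move=> [dU cU] TU cvT cT.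
have hb : forall i : 'I_n, exists M, 0 <= M /\ forall x, T x -> `|derive f x (delta_mx 0 i)| <= M.
  move=> i; apply: cont_bounded => // x Tx; exact: cU (TU _ Tx).
have [Mf hMf] := choice hb.
exists (\sum_i Mf i); split; first by apply: sumr_ge0 => i _; case: (hMf i).
move=> x y Tx Ty.
set v := x - y.
have seg : forall t : R, 0 <= t <= 1 -> T (y + t *: v).
  move=> t /andP[t0 t1].
  suff -> : y + t *: v = t *: x + (1 - t) *: y by apply: cvT.
  by rewrite /v scalerBr scalerBl scale1r addrCA.
have hder : forall t : R, 0 <= t <= 1 ->
    is_derive t 1 (fun s : R => f (y + s *: v)) ('D_v f (y + t *: v)).
  by move=> t ht; apply: line_derive; apply: dU; apply: TU; apply: seg.
have mvt : exists2 c : R, c \in `]0, 1[%R &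
    f (y + 1 *: v) - f (y + 0 *: v) = 'D_v f (y + c *: v) * (1 - 0).
  have := @MVT R (fun s : R => f (y + s *: v)) (fun t => 'D_v f (y + t *: v)) 0 1 ltr01.
  move=> H; apply: H.
  move=> t; rewrite in_itv /= => /andP[t0 t1]; apply: hder.
  by rewrite !ltW.
  apply: continuous_in_subspaceT => t; rewrite inE /= in_itv /= => ht.
  have := hder t ht => -[d1 _].
  by apply: differentiable_continuous; apply/derivable1_diffP.
have [c c01 hc] := mvt.
move: hc; rewrite scale1r scale0r addr0 subr0 mulr1 /v addrCA subrr addr0 => ->.
move: c01; rewrite in_itv /= => /andP[c0 c1].
have Tc : T (y + c *: v) by apply: seg; rewrite !ltW.
rewrite dir_sum; last by apply: dU; apply: TU.
apply: le_trans (ler_norm_sum _ _ _) _.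
rewrite mulr_suml; apply: ler_sum => i _.
rewrite normrM mulrC; apply: ler_pM.
- by [].
- by [].
- by case: (hMf i) => _ /(_ _ Tc).
- exact: abs_le_sqnorm.
Qed.

End Anal.

Lemma distr_le1 (R : realType) (T : finType) (f : T -> R) x : is_distr f -> f x <= 1.
Proof.
move=> [f0 f1]; rewrite -f1 (bigD1 x) //= lerDl sumr_ge0 // => y _.
Qed.

Lemma prod3 (R : realType) (a a' b b' c c' : R) :
  0 <= a <= 1 -> 0 <= a' <= 1 -> 0 <= b <= 1 -> 0 <= b' <= 1 -> 0 <= c <= 1 -> 0 <= c' <= 1 ->
  `|a * b * c - a' * b' * c'| <= `|a - a'| + `|b - b'| + `|c - c'|.
Proof.
move=> /andP[a0 a1] /andP[a'0 a'1] /andP[b0 b1] /andP[b'0 b'1] /andP[c0 c1] /andP[c'0 c'1].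
have -> : a * b * c - a' * b' * c' = (a - a') * (b * c) + (a' * c) * (b - b') + (a' * b') * (c - c') by ring.
apply: le_trans (ler_normD _ _) _; apply: lerD; last first.
  rewrite normrM (ger0_norm (mulr_ge0 a'0 b'0)); apply: ler_piMl => //.
  by rewrite mulr_ile1.
apply: le_trans (ler_normD _ _) _; apply: lerD.
  rewrite normrM (ger0_norm (mulr_ge0 b0 c0)); apply: ler_piMr => //.
  by rewrite mulr_ile1.
rewrite normrM (ger0_norm (mulr_ge0 a'0 c0)); apply: ler_piMl => //.
by rewrite mulr_ile1.
Qed.

Lemma sqnorm_ge0 (R : realType) n (v : 'rV[R]_n) : 0 <= sqnorm v.
Proof. by rewrite /sqnorm sumr_ge0 // => i _; rewrite sqr_ge0. Qed.

Lemma le_sum_ge0 (R : realType) (T : finType) (F : T -> R) i :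
  (forall j, 0 <= F j) -> F i <= \sum_j F j.
Proof. by move=> h; rewrite (bigD1 i) //= lerDl sumr_ge0. Qed.

Lemma sqrt_comp_le (R : realType) nh nl nb (x y : param R nh nl nb) :
  [/\ Num.sqrt (sqnorm (x.1.1 - y.1.1)) <= dist2 x y,
      Num.sqrt (sqnorm (x.1.2 - y.1.2)) <= dist2 x y &
      Num.sqrt (sqnorm (x.2 - y.2)) <= dist2 x y].
Proof.
have h1 := sqnorm_ge0 (x.1.1 - y.1.1).
have h2 := sqnorm_ge0 (x.1.2 - y.1.2).
have h3 := sqnorm_ge0 (x.2 - y.2).
split; rewrite /dist2 ler_sqrt ?addr_ge0 //; lra.
Qed.

Lemma lip_hfun (R : realType) (S A O : finType) (nh nl nb : nat)
  (Th : set 'rV[R]_nh) (Tl : set 'rV[R]_nl) (Tb : set 'rV[R]_nb)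
  (Uh : set 'rV[R]_nh) (Ul : set 'rV[R]_nl) (Ub : set 'rV[R]_nb)
  (pihi : 'rV[R]_nh -> S -> O -> R)
  (pilo : 'rV[R]_nl -> S -> O -> A -> R)
  (pib : 'rV[R]_nb -> S -> O -> bool -> R) (zeta : R) :
  convex_rV Th -> convex_rV Tl -> convex_rV Tb ->
  compact Th -> compact Tl -> compact Tb ->
  Th `<=` Uh -> Tl `<=` Ul -> Tb `<=` Ub ->
  (forall x s, Uh x -> is_distr (pihi x s)) ->
  (forall x s o, Ul x -> is_distr (pilo x s o)) ->
  (forall x s o, Ub x -> is_distr (pib x s o)) ->
  (forall s o, C1_on Uh (fun x => pihi x s o)) ->
  (forall s o a, C1_on Ul (fun x => pilo x s o a)) ->
  (forall s o b, C1_on Ub (fun x => pib x s o b)) ->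
  0 < zeta -> zeta < 1 ->
  exists L, 0 <= L /\ forall o' s a o b (x y : param R nh nl nb),
    inTheta Th Tl Tb x -> inTheta Th Tl Tb y ->
    `|hfun pihi pilo pib zeta x o' s a o b - hfun pihi pilo pib zeta y o' s a o b|
      <= L * dist2 x y.
Proof.
move=> cvh cvl cvb cph cpl cpb sh sl sb dhi dlo db c1hi c1lo c1b z0 z1.
have [Lbf hLb] := choice (fun q : S * O * bool =>
  lip_C1 (c1b q.1.1 q.1.2 q.2) sb cvb cpb).
have [Lhf hLh] := choice (fun q : S * O =>
  lip_C1 (c1hi q.1 q.2) sh cvh cph).
have [Llf hLl] := choice (fun q : S * O * A =>
  lip_C1 (c1lo q.1.1 q.1.2 q.2) sl cvl cpl).
pose Lb := \sum_q Lbf q. pose Lh := \sum_q Lhf q. pose Ll := \sum_q Llf q.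
have Lb0 : forall q, 0 <= Lbf q by move=> q; case: (hLb q).
have Lh0 : forall q, 0 <= Lhf q by move=> q; case: (hLh q).
have Ll0 : forall q, 0 <= Llf q by move=> q; case: (hLl q).
exists (Lb + Lh + Ll); split.
  by rewrite !addr_ge0 // sumr_ge0.
move=> o' s a o b x y [xh [xl xb]] [yh [yl yb]].
have [d1 d2 d3] := sqrt_comp_le x y.
have dd0 : 0 <= dist2 x y by rewrite /dist2 sqrtr_ge0.
have card1 : 1 <= cardO R O.
  rewrite /cardO (_ : 1 = 1%:R) // ler_nat; by apply/card_gt0P; exists o.
have zc0 : 0 <= zeta / cardO R O by rewrite divr_ge0 // ?ltW // (le_trans ler01).
have zc1 : zeta / cardO R O <= zeta.
  by rewrite ler_pdivrMr ?(lt_le_trans ltr01) // ler_peMr // ltW.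
have pbb : forall z, Tb z -> 0 <= pib z s o' b <= 1.
  move=> z hz; have hd := db z s o' (sb _ hz).
  by rewrite distr_le1 // andbT; case: hd.
have plb : forall z, Tl z -> 0 <= pilo z s o a <= 1.
  move=> z hz; have hd := dlo z s o (sl _ hz).
  by rewrite distr_le1 // andbT; case: hd.
have phb : forall z, Th z -> 0 <= pihibar pihi zeta z s o' b o <= 1.
  move=> z hz; rewrite /pihibar; case: ifP => _.
    have hd := dhi z s (sh _ hz).
    by rewrite distr_le1 // andbT; case: hd.
  case: ifP => _; last by rewrite zc0 /=; apply: le_trans zc1 (ltW z1).
  apply/andP; split; first by rewrite addr_ge0 // subr_ge0 ltW.
  lra.
rewrite /hfun.
apply: le_trans (prod3 (pbb _ xb) (pbb _ yb) (phb _ xh) (phb _ yh) (plb _ xl) (plb _ yl)) _.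
rewrite !mulrDl; apply: lerD; first apply: lerD.
- case: (hLb (s, o', b)) => _ /(_ _ _ xb yb) /= h; apply: le_trans h _.
  apply: le_trans (ler_wpM2l (Lb0 _) d3) _.
  by rewrite ler_wpM2r // /Lb (le_sum_ge0 (s, o', b) Lb0).
- rewrite /pihibar; case: ifP => _; last by rewrite subrr normr0 mulr_ge0 // sumr_ge0.
  case: (hLh (s, o)) => _ /(_ _ _ xh yh) /= h; apply: le_trans h _.
  apply: le_trans (ler_wpM2l (Lh0 _) d1) _.
  by rewrite ler_wpM2r // /Lh (le_sum_ge0 (s, o) Lh0).
- case: (hLl (s, o, a)) => _ /(_ _ _ xl yl) /= h; apply: le_trans h _.
  apply: le_trans (ler_wpM2l (Ll0 _) d2) _.
  by rewrite ler_wpM2r // /Ll (le_sum_ge0 (s, o, a) Ll0).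
Qed.

Lemma dist2_0 (R : realType) nh nl nb (x : param R nh nl nb) : dist2 x x = 0.
Proof.
have h : forall n (v : 'rV[R]_n), sqnorm (v - v) = 0.
  by move=> n v; rewrite /sqnorm big1 // => i _; rewrite subrr mxE expr0n.
by rewrite /dist2 !h !addr0 sqrtr0.
Qed.

Lemma int_absE (t1 t2 : int) : t1 <= t2 -> t1 + (`|t2 - t1|%N)%:Z = t2.
Proof. lia. Qed.

Lemma int_fwd (t1 t2 : int) (n N : nat) : t1 + N%:Z = t2 -> (n < N)%N ->
  [/\ t1 <= t1 + n%:Z <= t2, t1 <= t1 + n%:Z + 1 <= t2, t1 + n.+1%:Z = t1 + n%:Z + 1,
      t1 < t1 + n%:Z + 1 <= t2 & t1 <= t1 + n%:Z < t2].
Proof. move=> h hn; split; lia. Qed.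

Lemma int_bwd (t1 t2 : int) (n N : nat) : t1 + N%:Z = t2 -> (n < N)%N ->
  [/\ t1 <= t2 - n.+1%:Z <= t2, t1 <= t2 - n.+1%:Z + 1 <= t2, t2 - n%:Z = t2 - n.+1%:Z + 1,
      t1 < t2 - n.+1%:Z + 1 <= t2 & t1 <= t2 - n.+1%:Z < t2].
Proof. move=> h hn; split; lia. Qed.

Lemma int_ends (t1 t2 : int) (N : nat) : t1 + N%:Z = t2 -> t2 - N%:Z = t1 /\ t2 - 0%:Z = t2 /\ t1 + 0%:Z = t1.
Proof. lia. Qed.

Unset Implicit Arguments. Set Strict Implicit. Set Printing Implicit Defensive.

Theorem lemma11 (R : realType) (S A O : finType) (nh nl nb : nat)
  (Th : set 'rV[R]_nh) (Tl : set 'rV[R]_nl) (Tb : set 'rV[R]_nb)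
  (Uh : set 'rV[R]_nh) (Ul : set 'rV[R]_nl) (Ub : set 'rV[R]_nb)
  (pihi : 'rV[R]_nh -> S -> O -> R)
  (pilo : 'rV[R]_nl -> S -> O -> A -> R)
  (pib : 'rV[R]_nb -> S -> O -> bool -> R)
  (zeta eps_b : R)
  (* Theta = Th x Tl x Tb convex and compact *)
  (cvxh : convex_rV Th) (cvxl : convex_rV Tl) (cvxb : convex_rV Tb)
  (cpth : compact Th) (cptl : compact Tl) (cptb : compact Tb)
  (* open neighbourhood on which the policies are defined, positive, C^1 *)
  (oph : open Uh) (opl : open Ul) (opb : open Ub)
  (subh : Th `<=` Uh) (subl : Tl `<=` Ul) (subb : Tb `<=` Ub)
  (dhi : forall x s, Uh x -> is_distr (pihi x s))
  (dlo : forall x s o, Ul x -> is_distr (pilo x s o))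
  (db : forall x s o, Ub x -> is_distr (pib x s o))
  (poshi : forall x s o, Uh x -> 0 < pihi x s o)
  (poslo : forall x s o a, Ul x -> 0 < pilo x s o a)
  (posb : forall x s o b, Ub x -> 0 < pib x s o b)
  (c1hi : forall s o, C1_on Uh (fun x => pihi x s o))
  (c1lo : forall s o a, C1_on Ul (fun x => pilo x s o a))
  (c1b : forall s o b, C1_on Ub (fun x => pib x s o b))
  (* zeta in (0,1) *)
  (zeta_gt0 : 0 < zeta) (zeta_lt1 : zeta < 1)
  (* the constant eps_b *)
  (eps_gt0 : 0 < eps_b)
  (eps_ok : exists pobar : param R nh nl nb -> S -> O * bool -> R,
     forall th : param R nh nl nb, inTheta Th Tl Tb th ->
     forall s : S, is_distr (pobar th s) /\
     forall (o' o : O) (b : bool),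
       0 < eps_b * zeta * pobar th s (o, b) /\
       eps_b * zeta * pobar th s (o, b)
         <= pib th.2 s o' b * pihibar pihi zeta th.1.1 s o' b o /\
       pib th.2 s o' b * pihibar pihi zeta th.1.1 s o' b o
         <= eps_b^-1 * cardO R O * pobar th s (o, b))
  (* observation sequence, time window, parameters *)
  (sq : int -> S) (aq : int -> A) (t1 t2 : int) (t12 : t1 <= t2)
  (th th' : param R nh nl nb)
  (thT : inTheta Th Tl Tb th) (th'T : inTheta Th Tl Tb th')
  (phi phi' rho rho' : int -> meas R O)
  (phiP : forall t, t1 <= t <= t2 -> strict_prob (phi t))
  (phi'P : forall t, t1 <= t <= t2 -> strict_prob (phi' t))
  (rhoP : forall t, t1 <= t <= t2 -> strict_prob (rho t))
  (rho'P : forall t, t1 <= t <= t2 -> strict_prob (rho' t))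
  (phiF : forall t, t1 < t <= t2 -> forall o b,
     Fop pihi pilo pib zeta sq aq th t (phi (t - 1)) o b = phi t o b)
  (phi'F : forall t, t1 < t <= t2 -> forall o b,
     Fop pihi pilo pib zeta sq aq th' t (phi' (t - 1)) o b = phi' t o b)
  (rhoB : forall t, t1 <= t < t2 -> forall o b,
     Bop pihi pilo pib zeta sq aq th t (rho (t + 1)) o b = rho t o b)
  (rho'B : forall t, t1 <= t < t2 -> forall o b,
     Bop pihi pilo pib zeta sq aq th' t (rho' (t + 1)) o b = rho' t o b) :
  let d := dist2 th' th in
  let bound :=
    (1 - eps_b ^+ 2 * zeta / cardO R O) ^+ `|t2 - t1|%N
    + cardO R O * zcoef pihi pilo pib zeta th th'
        * Lip pihi pilo pib zeta Th Tl Tb th d / (eps_b ^+ 2 * zeta) * d in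
  tv (otimes (phi t2) (rho t2)) (otimes (phi' t2) (rho t2)) <= bound /\
  tv (otimes (phi' t1) (rho t1)) (otimes (phi' t1) (rho' t1)) <= bound.
Proof.
move=> d bound.
pose X := (O * bool)%type.
have [ob0 _] : exists o : O, True.
  case: (pickP (fun _ : O => true)) => [u _|h]; first by exists u.
  have ht : t1 <= t1 <= t2 by rewrite lexx t12.
  have := (phiP t1 ht).2; rewrite big1; first by move/eqP; rewrite eq_sym oner_eq0.
  by move=> -[u b]; have := h u.
pose x0 : X := (ob0, true).
have card0 : 0 < cardO R O by rewrite /cardO ltr0n; apply/card_gt0P; exists ob0.
have [pob hpob] := eps_ok.
pose kk (th0 : param R nh nl nb) (t : int) : X -> X -> R :=
  fun x' x => hfun pihi pilo pib zeta th0 x'.1 (sq t) (aq t) x.1 x.2.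
pose uc (f : meas R O) : X -> R := fun x => f x.1 x.2.
have hpos : forall th0, inTheta Th Tl Tb th0 -> forall o' s a o b,
    0 < hfun pihi pilo pib zeta th0 o' s a o b.
  move=> th0 [h [l b]] o' s a o b'; rewrite /hfun !mulr_gt0 //.
  - by apply: posb; apply: subb.
  - rewrite /pihibar; case: ifP => _; first by apply: poshi; apply: subh.
    have zc : 0 < zeta / cardO R O by rewrite divr_gt0.
    case: ifP => _ //; rewrite addr_gt0 // subr_gt0 //.
  - by apply: poslo; apply: subl.
have [L0 [L00 hL0]] := lip_hfun cvxh cvxl cvxb cpth cptl cptb subh subl subb
  dhi dlo db c1hi c1lo c1b zeta_gt0 zeta_lt1.
pose Lp := Lip pihi pilo pib zeta Th Tl Tb th d.
have d0 : 0 <= d by rewrite /d /dist2 sqrtr_ge0.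
have Lne : [set L : R | 0 <= L /\
    forall (o' : O) (s : S) (a : A) (o : O) (b : bool) (x y : param R nh nl nb),
      inTheta Th Tl Tb x -> inTheta Th Tl Tb y ->
      dist2 x th <= d -> dist2 y th <= d ->
      `|hfun pihi pilo pib zeta x o' s a o b - hfun pihi pilo pib zeta y o' s a o b|
        <= L * dist2 x y] !=set0.
  by exists L0; split => // o' s a o b x y hx hy _ _; apply: hL0.
have Lp0 : 0 <= Lp by apply: lb_le_inf Lne _ => L [].
have hD : forall o' s a o b, `|hfun pihi pilo pib zeta th o' s a o b
     - hfun pihi pilo pib zeta th' o' s a o b| <= Lp * d.
  move=> o' s a o b; rewrite distrC.
  have [dz|dp] := eqVneq d 0.
    have := hL0 o' s a o b th' th th'T thT; rewrite -/d dz !mulr0 //.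
  have dpos : 0 < d by rewrite lt_def dp d0.
  rewrite -ler_pdivrMr //; apply: lb_le_inf Lne _ => L [_ hL].
  rewrite ler_pdivrMr //; apply: hL => //.
  by rewrite dist2_0.
have hminle : forall th0 s a o' o b, hmin pihi pilo pib zeta th0 s a
    <= hfun pihi pilo pib zeta th0 o' s a o b.
  by move=> th0 s a o' o b; rewrite /hmin; exact: (bigmin_le _ (o', o, b)
    (fun p : O * O * bool => hfun pihi pilo pib zeta th0 p.1.1 s a p.1.2 p.2)).
have hmaxge : forall th0 s a o' o b, hfun pihi pilo pib zeta th0 o' s a o b
    <= hmax pihi pilo pib zeta th0 s a.
  by move=> th0 s a o' o b; rewrite /hmax; exact: (le_bigmax _
    (fun p : O * O * bool => hfun pihi pilo pib zeta th0 p.1.1 s a p.1.2 p.2) (o', o, b)).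
have hminpos : forall th0, inTheta Th Tl Tb th0 -> forall s a,
    0 < hmin pihi pilo pib zeta th0 s a.
  move=> th0 hth s a; rewrite /hmin; apply: (big_ind (fun v => 0 < v)).
  - exact: lt_le_trans (hpos _ hth ob0 s a ob0 true) (hmaxge _ _ _ _ _ _).
  - by move=> u v hu hv; rewrite lt_min hu hv.
  - by move=> p _; apply: hpos.
pose z := zcoef pihi pilo pib zeta th th'.
have zge : forall s a, 1 / hmin pihi pilo pib zeta th s a <= z.
  move=> s a; apply: le_trans (_ : _ <= Num.max (hmax pihi pilo pib zeta th s a)
      (hmax pihi pilo pib zeta th' s a) / (hmin pihi pilo pib zeta th s a *
        hmin pihi pilo pib zeta th' s a)) _; last first.
    rewrite /z /zcoef; exact: (le_bigmax _ (fun p : S * A =>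
      Num.max (hmax pihi pilo pib zeta th p.1 p.2) (hmax pihi pilo pib zeta th' p.1 p.2) /
     (hmin pihi pilo pib zeta th p.1 p.2 * hmin pihi pilo pib zeta th' p.1 p.2)) (s, a)).
  have m1 := hminpos _ thT s a; have m2 := hminpos _ th'T s a.
  have e1 : 1 / hmin pihi pilo pib zeta th s a = hmin pihi pilo pib zeta th' s a /
     (hmin pihi pilo pib zeta th s a * hmin pihi pilo pib zeta th' s a).
    by field; rewrite !gt_eqF.
  rewrite e1 ler_pM2r ?invr_gt0 ?mulr_gt0 //.
  apply: le_trans (hminle _ _ _ ob0 ob0 true) _.
  apply: le_trans (hmaxge _ _ _ ob0 ob0 true) _.
  by rewrite le_max lexx orbT.
pose lo := eps_b * zeta.
pose hi := eps_b^-1 * cardO R O.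
have lo0 : 0 < lo by rewrite mulr_gt0.
have hi0 : 0 < hi by rewrite mulr_gt0 // invr_gt0.
pose nuf (th0 : param R nh nl nb) (t : int) (x : X) :=
  pob th0 (sq t) x * pilo th0.1.2 (sq t) x.1 (aq t).
have nupos : forall th0, inTheta Th Tl Tb th0 -> forall t x, 0 < nuf th0 t x.
  move=> th0 hth t [u b]; rewrite /nuf mulr_gt0 //.
    have [_ hb] := hpob th0 hth (sq t); have [h1 _] := hb ob0 u b.
    by move: h1; rewrite pmulr_rgt0 // mulr_gt0.
  by apply: poslo; apply: subl; case: hth => _ [].
have kbl : forall th0, inTheta Th Tl Tb th0 -> forall t x' x,
    lo * (1 * nuf th0 t x) <= kk th0 t x' x.
  move=> th0 hth t x' [u b]; have [_ hb] := hpob th0 hth (sq t).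
  have [_ [h1 _]] := hb x'.1 u b.
  rewrite mul1r /nuf /kk /hfun /= mulrA ler_pM2r //.
  by apply: poslo; apply: subl; case: hth => _ [].
have kbh : forall th0, inTheta Th Tl Tb th0 -> forall t x' x,
    kk th0 t x' x <= hi * (1 * nuf th0 t x).
  move=> th0 hth t x' [u b]; have [_ hb] := hpob th0 hth (sq t).
  have [_ [_ h1]] := hb x'.1 u b.
  rewrite mul1r /nuf /kk /hfun /= mulrA ler_pM2r //.
  by apply: poslo; apply: subl; case: hth => _ [].
pose c := lo / hi.
have c0 : 0 < c by rewrite divr_gt0.
have c1 : 0 <= 1 - c.
  have := le_trans (kbl _ thT 0 x0 x0) (kbh _ thT 0 x0 x0).
  rewrite ler_pM2r ?mul1r ?nupos // => lh.
  by rewrite subr_ge0 ler_pdivrMr // mul1r.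
pose E := Lp * d.
have E0 : 0 <= E by rewrite mulr_ge0.
pose e := z * E.
have e0 : 0 <= e.
  apply: mulr_ge0 => //; apply: le_trans (zge (sq 0) (aq 0)).
  by rewrite divr_ge0 // ltW // hminpos.
have Em : forall t, E / hmin pihi pilo pib zeta th (sq t) (aq t) <= e.
  move=> t; rewrite /e mulrC -(mul1r (hmin _ _ _ _ _ _ _)^-1).
  by rewrite ler_wpM2r // zge.
have php : forall t, t1 <= t <= t2 -> forall x, 0 < uc (phi t) x.
  by move=> t h x; apply: (phiP t h).1.
have ph'p : forall t, t1 <= t <= t2 -> forall x, 0 < uc (phi' t) x.
  by move=> t h x; apply: (phi'P t h).1.
have rhp : forall t, t1 <= t <= t2 -> forall x, 0 < uc (rho t) x.
  by move=> t h x; apply: (rhoP t h).1.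
have rh'p : forall t, t1 <= t <= t2 -> forall x, 0 < uc (rho' t) x.
  by move=> t h x; apply: (rho'P t h).1.
pose N := `|t2 - t1|%N.
have eN : t1 + (N%:Z) = t2 by apply: int_absE.
pose D1 (n : nat) := tv (otimes (phi (t1 + n%:Z)) (rho (t1 + n%:Z)))
   (otimes (phi' (t1 + n%:Z)) (rho (t1 + n%:Z))).
have P1 : forall n, (n <= N)%N -> D1 n <= (1 - c) ^+ n + e / c.
  apply: rec_bound => //.
    rewrite /D1 addr0.
    have ht : t1 <= t1 <= t2 by rewrite lexx t12.
    apply: (tv_le1 x0 (f := fun x => uc (phi t1) x * uc (rho t1) x)
                      (g := fun x => uc (phi' t1) x * uc (rho t1) x)) => x.
      by rewrite mulr_gt0 ?php ?rhp.
    by rewrite mulr_gt0 ?ph'p ?rhp.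
  move=> n hn; have [ht ht1 et ht1' ht'] := @int_fwd _ _ _ _ eN hn.
  rewrite /D1 et; set t := t1 + n%:Z in ht ht1 ht1' ht' *.
  have ephi : phi (t + 1) = Fop pihi pilo pib zeta sq aq th (t + 1) (phi t).
    apply: funext => uu; apply: funext => bb; by rewrite -phiF ?addrK.
  have ephi' : phi' (t + 1) = Fop pihi pilo pib zeta sq aq th' (t + 1) (phi' t).
    apply: funext => uu; apply: funext => bb; by rewrite -phi'F ?addrK.
  have erho : rho t = Bop pihi pilo pib zeta sq aq th t (rho (t + 1)).
    apply: funext => uu; apply: funext => bb; by rewrite -rhoB.
  rewrite ephi ephi' erho.
  apply: le_trans (fwd_step x0 (k := kk th (t + 1)) (k' := kk th' (t + 1))
     (nu := nuf th (t + 1)) (E := E) (m := hmin pihi pilo pib zeta th (sq (t + 1)) (aq (t + 1)))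
     (ph := uc (phi t)) (ph' := uc (phi' t)) (w := uc (rho (t + 1)))
     lo0 hi0 (nupos _ thT _) (kbl _ thT _) (kbh _ thT _) (hminpos _ thT _ _) _ _ _
     (php _ ht) (ph'p _ ht) (rhp _ ht1)) _.
  - by move=> x' x; apply: hminle.
  - by move=> x' x; apply: hpos.
  - by move=> x' x; apply: hD.
  apply: lerD; last exact: Em.
  exact: lexx.
pose D2 (n : nat) := tv (otimes (phi' (t2 - n%:Z)) (rho (t2 - n%:Z)))
   (otimes (phi' (t2 - n%:Z)) (rho' (t2 - n%:Z))).
have P2 : forall n, (n <= N)%N -> D2 n <= (1 - c) ^+ n + e / c.
  apply: rec_bound => //.
    rewrite /D2 subr0.
    have ht : t1 <= t2 <= t2 by rewrite lexx t12.
    apply: (tv_le1 x0 (f := fun x => uc (phi' t2) x * uc (rho t2) x)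
                      (g := fun x => uc (phi' t2) x * uc (rho' t2) x)) => x.
      by rewrite mulr_gt0 ?ph'p ?rhp.
    by rewrite mulr_gt0 ?ph'p ?rh'p.
  move=> n hn; have [ht ht1 et ht1' ht'] := @int_bwd _ _ _ _ eN hn.
  rewrite /D2 et; set t := t2 - n.+1%:Z in ht ht1 ht1' ht' *.
  have ephi' : phi' (t + 1) = Fop pihi pilo pib zeta sq aq th' (t + 1) (phi' t).
    apply: funext => uu; apply: funext => bb; by rewrite -phi'F ?addrK.
  have erho : rho t = Bop pihi pilo pib zeta sq aq th t (rho (t + 1)).
    apply: funext => uu; apply: funext => bb; by rewrite -rhoB.
  have erho' : rho' t = Bop pihi pilo pib zeta sq aq th' t (rho' (t + 1)).
    apply: funext => uu; apply: funext => bb; by rewrite -rho'B.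
  rewrite erho erho' ephi'.
  apply: le_trans (bwd_step x0 (k := kk th (t + 1)) (k' := kk th' (t + 1))
     (nu := nuf th' (t + 1)) (E := E) (m := hmin pihi pilo pib zeta th (sq (t + 1)) (aq (t + 1)))
     (ph := uc (phi' t)) (r := uc (rho (t + 1))) (r' := uc (rho' (t + 1)))
     lo0 hi0 (nupos _ th'T _) (kbl _ th'T _) (kbh _ th'T _) (hminpos _ thT _ _) _ _ _
     (ph'p _ ht) (rhp _ ht1) (rh'p _ ht1)) _.
  - by move=> x' x; apply: hminle.
  - by move=> x' x; apply: hpos.
  - by move=> x' x; apply: hD.
  apply: lerD; last exact: Em.
  exact: lexx.
have ec : c = eps_b ^+ 2 * zeta / cardO R O.
  by rewrite /c /lo /hi; field; rewrite !gt_eqF.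
have ee : e / c = cardO R O * z * Lp / (eps_b ^+ 2 * zeta) * d.
  by rewrite ec /e /E; field; rewrite !gt_eqF.
have [eN1 [eN2 eN3]] := @int_ends _ _ _ eN.
split.
  have := P1 N (leqnn N); rewrite /D1 eN => h; apply: le_trans h _.
  by rewrite /bound ee ec.
have := P2 N (leqnn N); rewrite /D2 eN1 => h; apply: le_trans h _.
by rewrite /bound ee ec.
Qed.
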